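(* Let $E$ be an elliptic curve, let $V$ be an algebraic subvariety of $E^n$ and let $\phi:E^n\to E^n$ be an isogeny. Then: (i) $\mathrm{Stab}\,\phi^{-1}(V)=\phi^{-1}(\mathrm{Stab}\,V)$; (ii) if $\hat\phi:E^n\to E^n$ is an isogeny and $a\in\mathrm{End}(E)$ is such that $\hat\phi\phi=\phi\hat\phi=[a]$, then $$\left|\mathrm{Stab}\,\hat\phi^{-1}(V)\cap\ker[a]\right|=|\ker\hat\phi|\cdot\left|\mathrm{Stab}\,V\cap\ker\phi\right|.$$
   Context: For a subvariety $X\subseteq E^n$, $\mathrm{Stab}\,X=\{t\in E^n : X+t\subseteq X\}$. $[a]$ denotes multiplication by $a$ on $E^n$, and $|S|$ denotes the cardinality of a finite set $S$. *)

(* Defs.v *)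
From HB Require Import structures.
From mathcomp Require Import all_boot all_order all_algebra.
From mathcomp Require Import all_classical.
Set Implicit Arguments. Unset Strict Implicit. Unset Printing Implicit Defensive.
Import GRing.Theory.
Local Open Scope classical_set_scope.
Local Open Scope ring_scope.

(* Abstract group-theoretic setting: E is (the group of points of) the curve,
   E^n is 'rV[E]_n with componentwise addition. *)

Definition Stab (G : zmodType) (X : set G) : set G :=
  [set t | forall x, X x -> X (x + t)].

Definition kerS (G H : zmodType) (f : G -> H) : set G := f @^-1` [set 0].

Definition isogeny (G : zmodType) (f : {additive G -> G}) : Prop :=
  (forall y, exists x, f x = y) /\ finite_set (kerS f).

Definition mulE (E : zmodType) (n : nat) (a : E -> E) : 'rV[E]_n -> 'rV[E]_n :=
  map_mx a.

(* Main.v *)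
Require Import Defs.
From HB Require Import structures.
From mathcomp Require Import all_boot all_order all_algebra.
From mathcomp Require Import all_classical.
From mathcomp Require Import finmap.
Import GRing.Theory.
Local Open Scope classical_set_scope.
Local Open Scope ring_scope.

Lemma cardfsM (K K' : choiceType) (A : {fset K}) (B : {fset K'}) :
  (#|` (A `*` B)%fset| = #|` A| * #|` B|)%fset%N.
Proof.
rewrite /fsetM.
rewrite (perm_size (enum_imfset2 _ _)); last first.
  by move=> [a b] [c d] _ _ /= [-> ->].
by rewrite size_allpairs.
Qed.

Lemma stab_pre (G : zmodType) (V : set G) (f : {additive G -> G}) :
  (forall y, exists x, f x = y) ->
  Stab (f @^-1` V) = f @^-1` (Stab V).
Proof.
move=> surj; apply/seteqP; split => t /=.
  move=> Ht y Vy; have [x fx] := surj y.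
  have := Ht x; rewrite /= fx => /(_ Vy).
  by rewrite raddfD fx.
by move=> Ht x /= Vx; rewrite raddfD; exact: Ht.
Qed.

Theorem lemma3p2 (E : zmodType) (n : nat) (V : set 'rV[E]_n)
    (phi : {additive 'rV[E]_n -> 'rV[E]_n}) :
  isogeny phi ->
  Stab (phi @^-1` V) = phi @^-1` (Stab V) /\
  (forall (phih : {additive 'rV[E]_n -> 'rV[E]_n}) (a : {additive E -> E}),
     isogeny phih ->
     (forall x, phih (phi x) = mulE a x) ->
     (forall x, phi (phih x) = mulE a x) ->
     finite_set (Stab (phih @^-1` V) `&` kerS (mulE a)) /\
     (#|` fset_set (Stab (phih @^-1` V) `&` kerS (mulE a))|)%fset =
       (#|` fset_set (kerS phih)|%fset * #|` fset_set (Stab V `&` kerS phi)|%fset)%N).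
Proof.
move=> [surj finK]; split; first exact: stab_pre.
move=> phih a [surjh finKh] _ Hpp.
set G := 'rV[E]_n.
have sec : forall y : G, {x : G | phih x = y}.
  by move=> y; apply: cid; exact: surjh.
pose s y := proj1_sig (sec y).
have sK y : phih (s y) = y by rewrite /s; case: (sec y).
set S := Stab V `&` kerS phi.
set K := kerS phih.
pose g := fun p : G * G => p.1 + s p.2.
have finS : finite_set S by apply: finite_setIr.
have TE : Stab (phih @^-1` V) `&` kerS (mulE a) = g @` (K `*` S).
  rewrite stab_pre //; apply/seteqP; split => x /=.
    move=> [Sx Kx]; exists (x - s (phih x), phih x).
      split => /=; first by rewrite /K /kerS /= raddfB sK subrr.
      by split => //; rewrite /kerS /= Hpp.
    by rewrite /g /= subrK.
  move=> [[k y] [/= Kk [Sy Ky]] <-]; rewrite /g /=.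
  have -> : phih (k + s y) = y.
    by rewrite raddfD sK; move: Kk; rewrite /K /kerS /= => ->; rewrite add0r.
  split => //; rewrite /kerS /= -Hpp.
  by rewrite raddfD sK; move: Kk; rewrite /K /kerS /= => ->; rewrite add0r.
have finP : finite_set (K `*` S) by apply: finite_setX.
rewrite TE; split; first exact: finite_image.
rewrite fset_set_image // fset_setX // -cardfsM.
rewrite card_in_imfset //.
move=> [k y] [k' y'] H1 H2; move: H1 H2; rewrite !in_fsetM /= !in_fset_set //.
move=> /andP[/set_mem Kk _] /andP[/set_mem Kk' _].
rewrite /K /kerS /= in Kk Kk'.
rewrite /g /= => e.
have ey : y = y'.
  have := congr1 phih e; rewrite !raddfD !sK Kk Kk' !add0r //.
subst y'; congr (_, _); exact: (addIr _ e).
Qed.
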